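(* Let $(V,\mathrm{dist})$ be a metric space and $p_1,\dots,p_n\in V$ (not necessarily distinct). For $t\in[n]$ let $R_t:=\sum_{i=1}^t\mathrm{dist}(p_t,p_i)$ and $Q_t:=\sum_{i=1}^t\sum_{j=1}^t\mathrm{dist}(p_i,p_j)$. For any $t\in[n]$ with $Q_t>0$, $$\frac{2R_t}{Q_t}\ \ge\ \frac{\sum_{i=1}^n\mathrm{dist}(p_t,p_i)}{Q_n}.$$ *)

(* Defs.v *)
From HB Require Import structures.
From mathcomp Require Import all_boot all_order all_algebra.
From mathcomp Require Import reals.
Set Implicit Arguments. Unset Strict Implicit. Unset Printing Implicit Defensive.
Import Order.TTheory GRing.Theory Num.Theory.
Local Open Scope ring_scope.

Definition is_metric (R : realType) (V : Type) (dist : V -> V -> R) : Prop :=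
  (forall x y, 0 <= dist x y) /\
  (forall x y, dist x y = 0 <-> x = y) /\
  (forall x y, dist x y = dist y x) /\
  (forall x y z, dist x z <= dist x y + dist y z).

Definition Rsum (R : realType) (V : Type) (dist : V -> V -> R) (p : nat -> V) (t : nat) : R :=
  \sum_(1 <= i < t.+1) dist (p t) (p i).

Definition Qsum (R : realType) (V : Type) (dist : V -> V -> R) (p : nat -> V) (t : nat) : R :=
  \sum_(1 <= i < t.+1) \sum_(1 <= j < t.+1) dist (p i) (p j).

(* Main.v *)
Require Import Defs.
From HB Require Import structures.
From mathcomp Require Import all_boot all_order all_algebra.
From mathcomp Require Import reals.
From mathcomp Require Import lra.
Import Order.TTheory GRing.Theory Num.Theory.
Local Open Scope ring_scope.

Theorem lemma3p7 (R : realType) (V : Type) (dist : V -> V -> R)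
  (hd : is_metric dist) (n : nat) (p : nat -> V) (t : nat)
  (ht : (1 <= t <= n)%N) (hQ : 0 < Qsum dist p t) :
  (\sum_(1 <= i < n.+1) dist (p t) (p i)) / Qsum dist p n
    <= 2 * Rsum dist p t / Qsum dist p t.
Proof.
have [d0 [_ [dsym dtri]]] := hd.
move/andP: ht => [t1 tn].
set Qt := Qsum dist p t.
set Rt := Rsum dist p t.
pose f i := \sum_(1 <= j < t.+1) dist (p i) (p j).
pose T : R := t%:R.
have constS (c : R) : \sum_(1 <= j < t.+1) c = T * c.
  by rewrite sumr_const_nat subn1 /= mulr_natl.
have Rt0 : 0 <= Rt by apply: sumr_ge0 => i _.
have f0 i : 0 <= f i by apply: sumr_ge0 => j _.
have T0 : 0 <= T by rewrite ler0n.
have Qbound i : Qt <= 2 * T * f i.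
  rewrite /Qt /Qsum.
  apply: le_trans (_ : \sum_(1 <= j < t.+1) \sum_(1 <= k < t.+1)
     (dist (p i) (p j) + dist (p i) (p k)) <= _).
    apply: ler_sum => j _; apply: ler_sum => k _.
    by rewrite (dsym (p i) (p j)); apply: dtri.
  under eq_bigr do rewrite big_split /= constS.
  rewrite big_split /= -mulr_sumr constS /f.
  lra.
have QR : Qt <= 2 * T * Rt.
  have := Qbound t; by [].
have tri i : T * dist (p t) (p i) <= Rt + f i.
  rewrite -constS /Rt /Rsum /f -big_split /=.
  apply: ler_sum => j _; rewrite (dsym (p i)); apply: dtri.
have key i : dist (p t) (p i) * Qt <= 4 * Rt * f i.
  have := tri i; have := Qbound i; have := f0 i.
  have di0 : 0 <= dist (p t) (p i) by [].
  move=> fi0 Qf tr.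
  have [le|le] := lerP Rt (f i).
  - have h1 : dist (p t) (p i) * Qt <= dist (p t) (p i) * (2 * T * Rt)
      by apply: ler_wpM2l.
    nra.
  - have h1 : dist (p t) (p i) * Qt <= dist (p t) (p i) * (2 * T * f i)
      by apply: ler_wpM2l.
    nra.
pose X := \sum_(t.+1 <= i < n.+1) f i.
have X0 : 0 <= X by apply: sumr_ge0 => i _.
have Qn : Qt + 2 * X <= Qsum dist p n.
  rewrite /Qsum (big_cat_nat _ (n:=t.+1)) //=.
  rewrite (_ : \sum_(1 <= i < t.+1) \sum_(1 <= j < n.+1) dist (p i) (p j)
    = Qt + \sum_(t.+1 <= j < n.+1) f j); last first.
    under eq_bigr do rewrite (big_cat_nat _ (n:=t.+1)) //=.
    rewrite big_split /=; congr (_ + _); rewrite exchange_big_nat /f.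
    apply: eq_bigr => j _; apply: eq_bigr => k _; exact: dsym.
  have : X <= \sum_(t.+1 <= i < n.+1) \sum_(1 <= j < n.+1) dist (p i) (p j).
    apply: ler_sum => i _; rewrite (big_cat_nat _ (n:=t.+1)) //=.
    rewrite lerDl; by apply: sumr_ge0.
  rewrite -/X; set Y := \sum_(t.+1 <= i < n.+1) \sum_(1 <= j < n.+1) _; lra.
have Qt0 : 0 < Qt := hQ.
have Qn0 : 0 < Qsum dist p n by lra.
rewrite ler_pdivrMr // mulrAC ler_pdivlMr //.
rewrite (big_cat_nat _ (n:=t.+1)) //=.
have : \sum_(t.+1 <= i < n.+1) dist (p t) (p i) * Qt <= 4 * Rt * X.
  rewrite /X mulr_sumr; apply: ler_sum => i _; exact: key.
rewrite -mulr_suml -/(Rsum dist p t) -/Rt.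
move=> h.
have : 0 <= Rt * (Qsum dist p n - Qt - 2 * X) by apply: mulr_ge0; lra.
nra.
Qed.
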